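(* Let $n\ge 1$, and let $b,\lambda\in\mathbb{C}$ with $|b|=1$ and $|\lambda|=1$. Define the $n\times n$ matrix $B=[b_{i,j}]_{1\le i,j\le n}$ by $b_{i,j}=0$ if $j<i$; $b_{i,j}=(-1)^{j+1}\binom{j-2}{i-2}\dfrac{b}{\lambda^{i+j-2}}$ if $j\ge i$ and $i>1$; $b_{1,1}=b$; and $b_{1,j}=0$ for $2\le j\le n$. Then $B\overline{B}=I$.
   Context: $\overline{B}$ denotes the entrywise complex conjugate of $B$. *)

(* Defs.v *)
From HB Require Import structures.
From mathcomp Require Import all_boot all_order all_algebra.
From mathcomp Require Import reals complex.
Set Implicit Arguments. Unset Strict Implicit. Unset Printing Implicit Defensive.
Import Order.TTheory GRing.Theory Num.Theory.
Local Open Scope ring_scope.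

(* Entry b_{i,j} of the paper, with 1-based indices i j (as nats). *)
Definition Bentry (C : numClosedFieldType) (b lam : C) (i j : nat) : C :=
  if (j < i)%N then 0
  else if (1 < i)%N then
    (-1) ^+ (j + 1) * ('C(j - 2, i - 2))%:R * (b / lam ^+ (i + j - 2))
  else if j == 1%N then b else 0.

(* The n x n matrix B; row/column k : 'I_n corresponds to paper index k+1. *)
Definition Bmat (C : numClosedFieldType) (n : nat) (b lam : C) : 'M[C]_n :=
  \matrix_(i < n, j < n) Bentry b lam i.+1 j.+1.

(* Main.v *)
Require Import Defs.
From HB Require Import structures.
From mathcomp Require Import all_boot all_order all_algebra.
From mathcomp Require Import reals complex.
From mathcomp Require Import zify ring.
Import Order.TTheory GRing.Theory Num.Theory.
Local Open Scope ring_scope.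
Lemma binfac p q r : (p <= q)%N -> (q <= r)%N ->
  ('C(q,p) * 'C(r,q) = 'C(r,p) * 'C(r-p,q-p))%N.
Proof.
move=> hpq hqr.
have hf : (0 < p`! * (q-p)`! * (r-q)`!)%N by rewrite !muln_gt0 !fact_gt0.
apply/eqP; rewrite -(eqn_pmul2r hf); apply/eqP.
have e1 : ('C(q,p) * 'C(r,q) * (p`! * (q-p)`! * (r-q)`!) = r`!)%N.
  rewrite -(bin_fact hqr) -(bin_fact hpq); ring.
have e2 : ('C(r,p) * 'C(r-p,q-p) * (p`! * (q-p)`! * (r-q)`!) = r`!)%N.
  have hpr : (p <= r)%N by apply: leq_trans hqr.
  have h3 : (q - p <= r - p)%N by lia.
  have := bin_fact h3. have -> : (r - p - (q - p) = r - q)%N by lia.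
  move=> h4. rewrite -(bin_fact hpr) -h4; ring.
by rewrite e1 e2.
Qed.

Lemma altsum (C : comNzRingType) m :
  \sum_(t < m.+1) (-1)^+t *+ 'C(m,t) = (m == 0)%:R :> C.
Proof.
have := exprDn (1:C) (-1) m.
rewrite addrN expr0n => ->.
by apply: eq_bigr => i _; rewrite expr1n mul1r.
Qed.

Lemma bininv (C : comNzRingType) p r :
  \sum_(q < r.+1) (-1)^+(q+r) * ('C(q,p) * 'C(r,q))%:R = (p == r)%:R :> C.
Proof.
case: (ltnP r p) => hpr.
  rewrite big1; first by case: eqP hpr => // ->; rewrite ltnn.
  move=> q _; have : (q < p)%N by have := ltn_ord q; lia.
  by move=> hq; rewrite bin_small ?mul0n ?mulr0.
rewrite -(big_mkord xpredT (fun q => (-1)^+(q+r) * ('C(q,p) * 'C(r,q))%:R :> C)).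
rewrite (big_cat_nat _ (n:=p)) //=; last by lia.
rewrite big1_seq ?add0r; last first.
  move=> q /andP[_]; rewrite mem_index_iota => /andP[_ hq].
  by rewrite bin_small ?mul0n ?mulr0.
rewrite -{1}[p]add0n big_addn.
rewrite (eq_big_nat _ _ (F2 := fun t => ((-1)^+(p+r) * 'C(r,p)%:R) * ((-1)^+t *+ 'C(r-p,t)))); last first.
  move=> t /andP[_ ht].
  rewrite (binfac p (t+p) r); [|lia|lia].
  rewrite natrM addnK -mulr_natr.
  have -> : (t + p + r = t + (p + r))%N by lia.
  rewrite exprD; ring.
rewrite -big_distrr /=.
have -> : (r.+1 - p = (r - p).+1)%N by lia.
rewrite big_mkord altsum.
case: eqP => [e|ne].
  have -> : p = r by lia.
  by rewrite eqxx binn addnn -mul2n exprM sqrrN expr1n expr1n !mulr1.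
have /negbTE -> : p != r by apply/eqP; lia.
by rewrite mulr0.
Qed.

Lemma Bent_lo (C : numClosedFieldType) (b lam : C) p q :
  Bentry b lam p.+2 q.+2 = (-1)^+(q+1) * 'C(q,p)%:R * (b / lam^+(p+q+2)).
Proof.
rewrite /Bentry !ltnS; case: ltnP => h.
  by rewrite bin_small // mulr0 mul0r.
have -> : (q.+2 + 1 = (q + 1).+2)%N by lia.
have -> : (p.+2 + q.+2 - 2 = p + q + 2)%N by lia.
by rewrite /= !subSS !subn0 !exprS !mulN1r opprK.
Qed.

Lemma term (C : numClosedFieldType) (b lam : C) p j r :
  b^* = b^-1 -> lam^* = lam^-1 -> lam != 0 -> b != 0 ->
  Bentry b lam p.+2 j.+2 * (Bentry b lam j.+2 r.+2)^* =
  (-1)^+(j+r) * ('C(j,p) * 'C(r,j))%:R * (lam^+r / lam^+p).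
Proof.
move=> hb hl l0 b0.
rewrite natrM !Bent_lo !rmorphM rmorphXn rmorphN1 rmorph_nat fmorphV rmorphXn.
rewrite (_ : Num.Num_conj__canonical__GRing_RMorphism C b = b^-1) //.
rewrite (_ : Num.Num_conj__canonical__GRing_RMorphism C lam = lam^-1) //.
rewrite exprVn invrK !exprD.
rewrite expr1.
have hx : lam ^+ p != 0 by rewrite expf_neq0.
have hy : lam ^+ j != 0 by rewrite expf_neq0.
move: ((-1) ^+ j) ((-1) ^+ r) (lam ^+ p) (lam ^+ j) (lam ^+ r) hx hy => u v x y z hx hy.
by field; rewrite ?hx ?hy ?l0 ?b0.
Qed.

Theorem lemma3p5 (R : realType) (n : nat) (b lam : R[i]) :
  (1 <= n)%N -> `|b| = 1 -> `|lam| = 1 ->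
  Bmat n b lam *m map_mx Num.conj (Bmat n b lam) = 1%:M.
Proof.
move=> hn hb hl.
have hbc : b^* = b^-1 by rewrite invC_norm hb expr1n invr1 mul1r.
have hlc : lam^* = lam^-1 by rewrite invC_norm hl expr1n invr1 mul1r.
have b0 : b != 0 by rewrite -normr_eq0 hb oner_eq0.
have l0 : lam != 0 by rewrite -normr_eq0 hl oner_eq0.
apply/matrixP => i k; rewrite !mxE.
under eq_bigr do rewrite !mxE.
case: n hn i k => [//|n] _ [[|p] hp] [[|r] hr] /=; rewrite big_ord_recl /=.
all: under eq_bigr => j _ do rewrite /bump leq0n add1n.
all: have B1j : forall j, Bentry b lam 1 j.+2 = 0 by [].
all: have Bj1 : forall j, Bentry b lam j.+2 1 = 0 by [].
all: have B11 : Bentry b lam 1 1 = b by [].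
- rewrite B11 big1 ?addr0 ?hbc ?mulfV // => j _.
  by rewrite B1j mul0r.
- rewrite B11 B1j rmorph0 mulr0 add0r big1 // => j _.
  by rewrite B1j mul0r.
- rewrite Bj1 mul0r add0r big1 // => j _.
  by rewrite Bj1 rmorph0 mulr0.
rewrite Bj1 mul0r add0r.
under eq_bigr => j _ do rewrite term //.
rewrite -big_distrl /=.
rewrite -(big_mkord xpredT (fun j => (-1) ^+ (j + r) * ('C(j, p) * 'C(r, j))%:R : R[i])).
rewrite (big_cat_nat _ (n:=r.+1)) //=.
rewrite [X in _ + X]big1_seq ?addr0; last first.
  move=> q /andP[_]; rewrite mem_index_iota => /andP[hq _].
  by rewrite (bin_small hq) muln0 mulr0.
rewrite big_mkord bininv.
have -> : (Ordinal hp == Ordinal hr) = (p == r) by [].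
case: eqP => [->|_]; last by rewrite mul0r.
by rewrite mul1r mulfV // expf_neq0.
Qed.
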